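(* Let $(X,\mu)$ be an irreducible discrete-time BRW with independent diffusion, with diffusion matrix $P$ the transition matrix of a recurrent random walk on $X$ and $\rho_x=\rho$ for all $x\in X$. If there is global survival starting from some $x\in X$, then $q(w,y)=\bar q(w)<1$ for all $w,y\in X$ (strong local survival at every $y$ starting from every $w$).
   Context: $S_X:=\{f:X\to\mathbb N:\sum_yf(y)<\infty\}$, $X$ countable. A BRW with independent diffusion is given by offspring laws $\rho_x$ on $\mathbb N$ and a stochastic matrix $P=(p(x,y))$: $\mu_x(f)=\rho_x(\sum_yf(y))\frac{(\sum_yf(y))!}{\prod_yf(y)!}\prod_yp(x,y)^{f(y)}$, i.e. each particle at $x$ is replaced by a random number of children with law $\rho_x$, placed independently according to $p(x,\cdot)$. First moments $m_{xy}=p(x,y)\bar\rho_x$, $\bar\rho_x$ the mean of $\rho_x$; irreducible means every $y$ is reachable from every $x$ via a path with $m_{x_ix_{i+1}}>0$. Standing assumption: in every class of mutually reachable vertices there is a vertex at which a particle has, with positive probability, a number of children inside the class different from one. Global survival from $x$: with positive probability particles exist at every generation starting from one particle at $x$; $\bar q(x)$ is the probability of eventual total extinction and $q(w,y)$ the probability, starting from one particle at $w$, that eventually no particle is at $y$. *)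

(* Defs.v *)
From Stdlib Require Import Reals Lra ClassicalEpsilon Relations.
Open Scope R_scope.
Set Implicit Arguments.

Record countable (X : Type) := Countable {
  code : X -> nat;
  decode : nat -> option X;
  decode_code : forall x, decode (code x) = Some x;
  code_decode : forall n x, decode n = Some x -> code x = n }.

Definition eqX {X} (c : countable X) (x y : X) : bool := Nat.eqb (code c x) (code c y).

(** Total value of a series: its sum if it converges, 0 otherwise.
    (All series used below have nonnegative terms and bounded partial sums.) *)
Definition tsum (a : nat -> R) : R :=
  match excluded_middle_informative (exists l, infinite_sum a l) with
  | left H => proj1_sig (constructive_indefinite_description _ H)
  | right _ => 0
  end.

Definition seqX {X} (c : countable X) (f : X -> R) (n : nat) : R :=
  match decode c n with Some x => f x | None => 0 end.
Definition sumX {X} (c : countable X) (f : X -> R) : R := tsum (seqX c f).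
Definition sumX_is {X} (c : countable X) (f : X -> R) (l : R) : Prop :=
  infinite_sum (seqX c f) l.

Definition stochastic {X} (c : countable X) (p : X -> X -> R) : Prop :=
  (forall x y, 0 <= p x y) /\ (forall x, sumX_is c (p x) 1).
Definition prob_nat (rho : nat -> R) : Prop :=
  (forall k, 0 <= rho k) /\ infinite_sum rho 1.

Fixpoint pn {X} (c : countable X) (p : X -> X -> R) (n : nat) (x y : X) : R :=
  match n with
  | O => if eqX c x y then 1 else 0
  | S n' => sumX c (fun w => p x w * pn c p n' w y)
  end.
Definition recurrent {X} (c : countable X) (p : X -> X -> R) : Prop :=
  forall x, ~ (exists l, infinite_sum (fun n => pn c p n x x) l).

(** First moments m_{xy} = p(x,y) * mean(rho): m_{xy} > 0 iff p(x,y) > 0 and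
    rho charges some k >= 1 (the mean may be infinite). *)
Definition m_pos {X} (rho : nat -> R) (p : X -> X -> R) (x y : X) : Prop :=
  0 < p x y /\ exists k, (1 <= k)%nat /\ 0 < rho k.
Definition irreducible {X} (rho : nat -> R) (p : X -> X -> R) : Prop :=
  forall x y, clos_refl_trans X (m_pos rho p) x y.

(** Generating function of the BRW with independent diffusion, rho_x = rho:
    G(z)(x) = sum_f mu_x(f) prod_y z(y)^{f(y)}
            = sum_k rho(k) (sum_w p(x,w) z(w))^k. *)
Definition Gen {X} (c : countable X) (rho : nat -> R) (p : X -> X -> R)
  (z : X -> R) (x : X) : R :=
  tsum (fun k => rho k * (sumX c (fun w => p x w * z w)) ^ k).

(** v n x = probability, starting from one particle at x, that there are no
    particles at generation n. *)
Fixpoint ext_by {X} (c : countable X) (rho : nat -> R) (p : X -> X -> R)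
  (n : nat) : X -> R :=
  match n with
  | O => fun _ => 0
  | S n' => Gen c rho p (ext_by c rho p n')
  end.

(** u y N n x = probability, starting from one particle at x, that there is
    no particle at y in any generation k with N <= k <= n. *)
Fixpoint avoid {X} (c : countable X) (rho : nat -> R) (p : X -> X -> R)
  (y : X) (N n : nat) : X -> R :=
  match n with
  | O => match N with
         | O => fun x => if eqX c x y then 0 else 1
         | S _ => fun _ => 1
         end
  | S n' => match N with
            | O => fun x => (if eqX c x y then 0 else 1) * Gen c rho p (avoid c rho p y O n') x
            | S N' => Gen c rho p (avoid c rho p y N' n')
            end
  end.

(** qbar(x) = L : probability of eventual global extinction
    = lim_n P(no particles at generation n). *)
Definition is_qbar {X} (c : countable X) (rho : nat -> R) (p : X -> X -> R)
  (x : X) (L : R) : Prop :=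
  Un_cv (fun n => ext_by c rho p n x) L.

(** q(w,y) = L : probability that eventually no particle is at y
    = lim_N lim_n P(no particle at y in generations N..n). *)
Definition is_q {X} (c : countable X) (rho : nat -> R) (p : X -> X -> R)
  (w y : X) (L : R) : Prop :=
  exists l : nat -> R,
    (forall N, Un_cv (fun n => avoid c rho p y N n w) (l N)) /\ Un_cv l L.

Definition global_survival {X} (c : countable X) (rho : nat -> R) (p : X -> X -> R)
  (x : X) : Prop :=
  exists L, is_qbar c rho p x L /\ L < 1.

(* Main.v *)
Require Import Defs.
From Stdlib Require Import Reals Relations Lra Lia FunctionalExtensionality ClassicalEpsilon.
Open Scope R_scope.


Lemma tsum_eq (a : nat -> R) l : infinite_sum a l -> tsum a = l.
Proof.
  intro H. unfold tsum. destruct excluded_middle_informative as [e|e].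
  - destruct (constructive_indefinite_description _ e) as [l' Hl']. simpl.
    eapply uniqueness_sum; eauto.
  - exfalso. apply e. eauto.
Qed.

Lemma is_plus (a b : nat -> R) la lb : infinite_sum a la -> infinite_sum b lb ->
  infinite_sum (fun n => a n + b n) (la + lb).
Proof.
  intros Ha Hb. unfold infinite_sum in *.
  pose proof (CV_plus _ _ _ _ Ha Hb) as H.
  intros eps He. destruct (H eps He) as [N HN]. exists N. intros n Hn.
  rewrite plus_sum. apply HN; auto.
Qed.

Lemma cv_const c : Un_cv (fun _ => c) c.
Proof. intros eps He. exists 0%nat. intros. unfold Rdist. rewrite Rminus_diag, Rabs_R0. lra. Qed.

Lemma is_scal (a : nat -> R) la c : infinite_sum a la ->
  infinite_sum (fun n => c * a n) (c * la).
Proof.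
  intros Ha. 
  assert (H := CV_mult (fun _ => c) _ c la (cv_const c) Ha).
  intros eps He. destruct (H eps He) as [N HN]. exists N. intros n Hn.
  replace (fun i => c * a i) with (fun i => a i * c).
  rewrite <- scal_sum. apply HN; auto.
  apply functional_extensionality; intro; ring.
Qed.

Lemma is_ext (a b : nat -> R) l : (forall n, a n = b n) -> infinite_sum a l -> infinite_sum b l.
Proof. intros E H. replace b with a; auto. apply functional_extensionality; auto. Qed.

Lemma is_comp (a b : nat -> R) lb : (forall n, 0 <= a n <= b n) -> infinite_sum b lb ->
  exists la, infinite_sum a la.
Proof.
  intros H Hb. destruct (Rseries_CV_comp a b H (exist _ lb Hb)) as [la Hla].
  exists la. exact Hla.
Qed.

Lemma is_le (a b : nat -> R) la lb : (forall n, a n <= b n) -> infinite_sum a la -> infinite_sum b lb -> la <= lb.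
Proof.
  intros H Ha Hb. eapply Rle_cv_lim; [|exact Ha|exact Hb].
  intro n. apply sum_Rle. intros; auto.
Qed.

Lemma is_ge0 (a : nat -> R) la : (forall n, 0 <= a n) -> infinite_sum a la -> 0 <= la.
Proof.
  intros H Ha. apply (is_le (fun _ => 0) a 0 la); auto.
  intros eps He. exists 0%nat. intros n _. rewrite sum_cte. unfold Rdist. 
  rewrite Rmult_0_l, Rminus_diag, Rabs_R0. lra.
Qed.

Lemma term_le_sum (a : nat -> R) k N : (forall n, 0 <= a n) -> (k <= N)%nat -> a k <= sum_f_R0 a N.
Proof.
  intros H. induction N; intro Hk.
  - inversion Hk. simpl. lra.
  - inversion Hk. + subst. simpl. pose proof (cond_pos_sum a N H). lra.
    + simpl. pose proof (H (S N)). specialize (IHN H1). lra.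
Qed.

Lemma term_le_is (a : nat -> R) k l : (forall n, 0 <= a n) -> infinite_sum a l -> a k <= l.
Proof.
  intros H Hl. eapply Rle_trans. apply (term_le_sum a k k H); auto.
  apply sum_incr; auto.
Qed.
Definition Pop {X} (c : countable X) (p : X -> X -> R) (z : X -> R) (x : X) : R :=
  sumX c (fun w => p x w * z w).
Definition phi (rho : nat -> R) (s : R) : R := tsum (fun k => rho k * s ^ k).
Definition b01 {X} (z : X -> R) := forall w : X, 0 <= z w <= 1.

Lemma sX_eq {X} (c : countable X) f l : sumX_is c f l -> sumX c f = l.
Proof. apply tsum_eq. Qed.

Lemma sX_plus {X} (c : countable X) f g lf lg : sumX_is c f lf -> sumX_is c g lg ->
  sumX_is c (fun w => f w + g w) (lf + lg).
Proof.
  intros Hf Hg. unfold sumX_is. eapply is_ext; [|apply (is_plus _ _ _ _ Hf Hg)].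
  intro n. unfold seqX. destruct (decode c n); lra.
Qed.

Lemma sX_scal {X} (c : countable X) f lf a : sumX_is c f lf ->
  sumX_is c (fun w => a * f w) (a * lf).
Proof.
  intros Hf. unfold sumX_is. eapply is_ext; [|apply (is_scal _ _ a Hf)].
  intro n. unfold seqX. destruct (decode c n); lra.
Qed.

Lemma sX_ext {X} (c : countable X) f g l : (forall w, f w = g w) -> sumX_is c f l -> sumX_is c g l.
Proof.
  intros E H. unfold sumX_is. eapply is_ext; [|exact H].
  intro n. unfold seqX. destruct (decode c n); auto.
Qed.

Lemma sX_comp {X} (c : countable X) f g lg : (forall w, 0 <= f w <= g w) -> sumX_is c g lg ->
  exists lf, sumX_is c f lf /\ 0 <= lf <= lg.
Proof.
  intros H Hg. destruct (is_comp (seqX c f) (seqX c g) lg) as [lf Hf]; auto.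
  - intro n. unfold seqX. destruct (decode c n); auto. lra.
  - exists lf. split; auto. split.
    + apply (is_ge0 (seqX c f)); auto. intro n. unfold seqX. destruct (decode c n); auto.
      apply H. lra.
    + apply (is_le (seqX c f) (seqX c g)); auto. intro n. unfold seqX. destruct (decode c n); auto.
      apply H. lra.
Qed.

Lemma sX_le {X} (c : countable X) f g lf lg : (forall w, f w <= g w) -> sumX_is c f lf -> sumX_is c g lg -> lf <= lg.
Proof.
  intros H Hf Hg. apply (is_le (seqX c f) (seqX c g)); auto.
  intro n. unfold seqX. destruct (decode c n); auto. lra.
Qed.

Lemma sX_term {X} (c : countable X) f l x : (forall w, 0 <= f w) -> sumX_is c f l -> f x <= l.
Proof.
  intros H Hl. replace (f x) with (seqX c f (code c x)).
  - apply term_le_is; auto. intro n. unfold seqX. destruct (decode c n); auto. lra.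
  - unfold seqX. rewrite decode_code. auto.
Qed.

Lemma Pop_is {X} (c : countable X) p z x : stochastic c p -> b01 z ->
  sumX_is c (fun w => p x w * z w) (Pop c p z x) /\ 0 <= Pop c p z x <= 1.
Proof.
  intros [Hp0 Hp1] Hz.
  destruct (sX_comp c (fun w => p x w * z w) (p x) 1) as [l [Hl Hb]]; auto.
  - intro w. destruct (Hz w). pose proof (Hp0 x w). split. apply Rmult_le_pos; auto.
    rewrite <- (Rmult_1_r (p x w)) at 2. apply Rmult_le_compat_l; auto.
  - unfold Pop. rewrite (sX_eq c _ l Hl). auto.
Qed.

Lemma Pop_const {X} (c : countable X) p a x : stochastic c p -> Pop c p (fun _ => a) x = a.
Proof.
  intros [Hp0 Hp1]. unfold Pop. apply sX_eq.
  pose proof (sX_scal c _ _ a (Hp1 x)) as H. rewrite Rmult_1_r in H.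
  eapply sX_ext; [|exact H]. intro; simpl; ring.
Qed.

Lemma Pop_affine {X} (c : countable X) p z a b x : stochastic c p -> b01 z ->
  Pop c p (fun w => a + b * z w) x = a + b * Pop c p z x.
Proof.
  intros Hp Hz. destruct (Pop_is c p z x Hp Hz) as [H1 _].
  destruct Hp as [Hp0 Hp1].
  unfold Pop at 1. apply sX_eq.
  pose proof (sX_plus c _ _ _ _ (sX_scal c _ _ a (Hp1 x)) (sX_scal c _ _ b H1)) as H.
  rewrite Rmult_1_r in H. eapply sX_ext; [|exact H]. intro; simpl; ring.
Qed.

Lemma Pop_mono {X} (c : countable X) p z1 z2 x : stochastic c p -> b01 z1 -> b01 z2 ->
  (forall w, z1 w <= z2 w) -> Pop c p z1 x <= Pop c p z2 x.
Proof.
  intros Hp H1 H2 H. destruct (Pop_is c p z1 x Hp H1) as [A _].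
  destruct (Pop_is c p z2 x Hp H2) as [B _].
  eapply sX_le; [|exact A|exact B]. intro w. apply Rmult_le_compat_l; auto. apply Hp.
Qed.

Lemma Pop_term {X} (c : countable X) p z x w : stochastic c p -> b01 z ->
  p x w * z w <= Pop c p z x.
Proof.
  intros Hp Hz. destruct (Pop_is c p z x Hp Hz) as [A _].
  apply (sX_term c (fun w => p x w * z w) _ w); auto. intro v. apply Rmult_le_pos. apply Hp. apply Hz.
Qed.
Lemma pow01 s k : 0 <= s <= 1 -> 0 <= s ^ k <= 1.
Proof.
  intros H. induction k; simpl. lra. split. apply Rmult_le_pos; lra.
  rewrite <- (Rmult_1_l 1). apply Rmult_le_compat; lra.
Qed.

Lemma phi_is rho s : prob_nat rho -> 0 <= s <= 1 ->
  infinite_sum (fun k => rho k * s ^ k) (phi rho s) /\ 0 <= phi rho s <= 1.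
Proof.
  intros [H0 H1] Hs.
  destruct (is_comp (fun k => rho k * s ^ k) rho 1) as [l Hl]; auto.
  - intro n. pose proof (pow01 s n Hs). pose proof (H0 n). split. apply Rmult_le_pos; lra.
    rewrite <- (Rmult_1_r (rho n)) at 2. apply Rmult_le_compat_l; lra.
  - unfold phi. rewrite (tsum_eq _ l Hl). split; auto. split.
    + apply (is_ge0 _ _ (fun n => Rmult_le_pos _ _ (H0 n) (proj1 (pow01 s n Hs))) Hl).
    + apply (is_le (fun k => rho k * s ^ k) rho); auto. intro n.
      pose proof (pow01 s n Hs). pose proof (H0 n).
      rewrite <- (Rmult_1_r (rho n)) at 2. apply Rmult_le_compat_l; lra.
Qed.

Lemma phi_mono rho s t : prob_nat rho -> 0 <= s -> s <= t -> t <= 1 -> phi rho s <= phi rho t.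
Proof.
  intros Hr H1 H2 H3. destruct (phi_is rho s Hr) as [A _]; [lra|].
  destruct (phi_is rho t Hr) as [B _]; [lra|].
  apply (is_le _ _ _ _ (fun n => Rmult_le_compat_l _ _ _ (proj1 Hr n) (pow_incr s t n (conj H1 H2))) A B).
Qed.

Lemma pow_convex v t k : 0 <= v <= 1 -> 0 <= t <= 1 -> ((1 - t) * v + t) ^ k <= (1 - t) * v ^ k + t.
Proof.
  intros Hv Ht. induction k; simpl. lra.
  pose proof (pow01 v k Hv).
  assert (Hu : 0 <= (1 - t) * v + t <= 1) by nra.
  apply Rle_trans with (((1 - t) * v + t) * ((1 - t) * v ^ k + t)).
  apply Rmult_le_compat_l; lra.
  assert (E: (1 - t) * (v * v ^ k) + t - ((1 - t) * v + t) * ((1 - t) * v ^ k + t)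
     = t * (1 - t) * ((1 - v) * (1 - v ^ k))) by ring.
  assert (0 <= t * (1 - t) * ((1 - v) * (1 - v ^ k))).
  { apply Rmult_le_pos. nra. apply Rmult_le_pos; lra. }
  lra.
Qed.

Lemma phi_convex rho v t : prob_nat rho -> 0 <= v <= 1 -> 0 <= t <= 1 ->
  phi rho ((1 - t) * v + t) <= (1 - t) * phi rho v + t.
Proof.
  intros Hr Hv Ht. destruct (phi_is rho v Hr Hv) as [A _].
  destruct (phi_is rho ((1 - t) * v + t) Hr) as [B _]; [nra|].
  pose proof (is_plus _ _ _ _ (is_scal _ _ (1 - t) A) (is_scal _ _ t (proj2 Hr))) as C.
  rewrite Rmult_1_r in C.
  assert (T : forall n, rho n * ((1 - t) * v + t) ^ n <= (1 - t) * (rho n * v ^ n) + t * rho n).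
  { intro n. pose proof (proj1 Hr n). pose proof (pow_convex v t n Hv Ht).
    replace ((1 - t) * (rho n * v ^ n) + t * rho n) with (rho n * ((1 - t) * v ^ n + t)) by ring.
    apply Rmult_le_compat_l; auto. }
  apply (is_le _ _ _ _ T B C).
Qed.
Fixpoint vs (rho : nat -> R) (n : nat) : R :=
  match n with O => 0 | S n' => phi rho (vs rho n') end.

Fixpoint grw {X} (c : countable X) (p : X -> X -> R) (y : X) (N n : nat) : X -> R :=
  match n with
  | O => match N with
         | O => fun x => if eqX c x y then 0 else 1
         | S _ => fun _ => 1
         end
  | S n' => match N with
            | O => fun x => (if eqX c x y then 0 else 1) * Pop c p (grw c p y O n') x
            | S N' => Pop c p (grw c p y N' n')
            end
  end.

Lemma ind01 {X} (c : countable X) x y : 0 <= (if eqX c x y then 0 else 1) <= 1.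
Proof. destruct (eqX c x y); lra. Qed.

Lemma vs01 rho n : prob_nat rho -> 0 <= vs rho n <= 1.
Proof. intro H. induction n; simpl. lra. apply phi_is; auto. Qed.

Lemma ext_vs {X} (c : countable X) rho p n x : prob_nat rho -> stochastic c p ->
  ext_by c rho p n x = vs rho n.
Proof.
  intros Hr Hp. revert x. induction n; intro x; simpl; auto.
  change (phi rho (Pop c p (ext_by c rho p n) x) = phi rho (vs rho n)).
  f_equal. replace (ext_by c rho p n) with (fun _ : X => vs rho n).
  apply Pop_const; auto. apply functional_extensionality; intro; auto.
Qed.

Lemma avoid01 {X} (c : countable X) rho p y N n : prob_nat rho -> stochastic c p ->
  b01 (avoid c rho p y N n).
Proof.
  intros Hr Hp. revert N. induction n; intros N x.
  - destruct N; simpl. apply ind01. lra.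
  - destruct N; simpl.
    + pose proof (ind01 c x y). 
      assert (0 <= Gen c rho p (avoid c rho p y 0 n) x <= 1).
      { apply phi_is; auto. apply Pop_is; auto. }
      nra.
    + apply phi_is; auto. apply Pop_is; auto.
Qed.

Lemma grw01 {X} (c : countable X) p y N n : stochastic c p -> b01 (grw c p y N n).
Proof.
  intros Hp. revert N. induction n; intros N x.
  - destruct N; simpl. apply ind01. lra.
  - destruct N; simpl.
    + pose proof (ind01 c x y). 
      assert (0 <= Pop c p (grw c p y 0 n) x <= 1) by (apply Pop_is; auto).
      nra.
    + apply Pop_is; auto.
Qed.

Lemma avoid_dec {X} (c : countable X) rho p y N n x : prob_nat rho -> stochastic c p ->
  avoid c rho p y N (S n) x <= avoid c rho p y N n x.
Proof.
  intros Hr Hp. revert N x. induction n; intros N x.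
  - destruct N; simpl.
    + pose proof (ind01 c x y).
      assert (0 <= Gen c rho p (avoid c rho p y 0 0) x <= 1).
      { apply phi_is; auto. apply Pop_is; auto. apply (avoid01 c rho p y 0 0); auto. }
      simpl in H0. destruct (eqX c x y); lra.
    + apply phi_is; auto. apply Pop_is; auto. apply (avoid01 c rho p y N 0); auto.
  - destruct N.
    + change ((if eqX c x y then 0 else 1) * phi rho (Pop c p (avoid c rho p y 0 (S n)) x)
         <= (if eqX c x y then 0 else 1) * phi rho (Pop c p (avoid c rho p y 0 n) x)).
      apply Rmult_le_compat_l. apply ind01.
      apply phi_mono; auto. apply Pop_is; auto. apply avoid01; auto.
      apply Pop_mono; auto; try apply avoid01; auto.
      apply Pop_is; auto. apply avoid01; auto.
    + change (phi rho (Pop c p (avoid c rho p y N (S n)) x)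
         <= phi rho (Pop c p (avoid c rho p y N n) x)).
      apply phi_mono; auto. apply Pop_is; auto. apply avoid01; auto.
      apply Pop_mono; auto; try apply avoid01; auto.
      apply Pop_is; auto. apply avoid01; auto.
Qed.

Lemma avoid_lb {X} (c : countable X) rho p y N n x : prob_nat rho -> stochastic c p ->
  vs rho N <= avoid c rho p y N n x.
Proof.
  intros Hr Hp. revert n x. induction N; intros n x.
  - simpl. apply avoid01; auto.
  - destruct n.
    + simpl. apply (vs01 rho (S N) Hr).
    + change (phi rho (vs rho N) <= phi rho (Pop c p (avoid c rho p y N n) x)).
      apply phi_mono; auto. apply vs01; auto.
      rewrite <- (Pop_const c p (vs rho N) x Hp) at 1.
      apply Pop_mono; auto. intro; apply vs01; auto. apply avoid01; auto.
      apply Pop_is; auto. apply avoid01; auto.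
Qed.

Lemma avoid_ub {X} (c : countable X) rho p y N n x : prob_nat rho -> stochastic c p ->
  avoid c rho p y N n x <= vs rho n + (1 - vs rho n) * grw c p y N n x.
Proof.
  intros Hr Hp. revert N x. induction n; intros N x.
  - destruct N; simpl; lra.
  - pose proof (vs01 rho n Hr) as Hv. pose proof (vs01 rho (S n) Hr) as Hv'.
    assert (KEY : forall N', phi rho (Pop c p (avoid c rho p y N' n) x) <=
          vs rho (S n) + (1 - vs rho (S n)) * Pop c p (grw c p y N' n) x).
    { intro N'. pose proof (Pop_is c p (grw c p y N' n) x Hp (grw01 c p y N' n Hp)) as [_ Ht].
      set (t := Pop c p (grw c p y N' n) x) in *.
      assert (B : b01 (fun w => vs rho n + (1 - vs rho n) * grw c p y N' n w)).
      { intro w. pose proof (grw01 c p y N' n Hp w). nra. }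
      apply Rle_trans with (phi rho (vs rho n + (1 - vs rho n) * t)).
      - assert (M : Pop c p (avoid c rho p y N' n) x <= vs rho n + (1 - vs rho n) * t).
        { unfold t. rewrite <- Pop_affine; auto.
          apply Pop_mono; auto. all: try apply avoid01; try apply grw01; try (intro w; apply IHn); auto. }
        assert (M2 : 0 <= Pop c p (avoid c rho p y N' n) x) by (apply Pop_is; auto; apply avoid01; auto).
        apply phi_mono; auto. nra.
      - replace (vs rho n + (1 - vs rho n) * t) with ((1 - t) * vs rho n + t) by ring.
        eapply Rle_trans. apply phi_convex; auto. simpl. lra. }
    destruct N.
    + change ((if eqX c x y then 0 else 1) * phi rho (Pop c p (avoid c rho p y 0 n) x)
         <= vs rho (S n) + (1 - vs rho (S n)) * ((if eqX c x y then 0 else 1) * Pop c p (grw c p y 0 n) x)).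
      specialize (KEY 0%nat). destruct (eqX c x y); lra.
    + apply KEY.
Qed.
Lemma sum_mono_N (a : nat -> R) N M : (forall n, 0 <= a n) -> (N <= M)%nat -> sum_f_R0 a N <= sum_f_R0 a M.
Proof.
  intros H HNM. induction HNM. lra. simpl. pose proof (H (S m)). lra.
Qed.

Lemma sum_diff (a b : nat -> R) M d : (forall k, a k <= b k) ->
  sum_f_R0 a (M + d) - sum_f_R0 a M <= sum_f_R0 b (M + d) - sum_f_R0 b M.
Proof.
  intros H. induction d. rewrite Nat.add_0_r. lra.
  rewrite Nat.add_succ_r. simpl. pose proof (H (S (M + d))). lra.
Qed.

Lemma fin_cv (a : nat -> nat -> R) M : (forall k, Un_cv (fun n => a n k) 0) ->
  Un_cv (fun n => sum_f_R0 (a n) M) 0.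
Proof.
  intros H. induction M; simpl. apply H.
  replace 0 with (0 + 0) by ring. apply CV_plus; auto.
Qed.

Lemma cv_shift (u : nat -> R) l : Un_cv (fun n => u (S n)) l -> Un_cv u l.
Proof.
  intros H eps He. destruct (H eps He) as [N HN]. exists (S N). intros n Hn.
  destruct n. lia. apply HN. lia.
Qed.

Lemma dom_cv {X} (c : countable X) p (zs : nat -> X -> R) x : stochastic c p ->
  (forall n, b01 (zs n)) -> (forall w, Un_cv (fun n => zs n w) 0) ->
  Un_cv (fun n => Pop c p (zs n) x) 0.
Proof.
  intros Hp Hz Hc eps He.
  pose proof (proj2 Hp x) as Hs. unfold sumX_is in Hs.
  set (s := seqX c (p x)) in *.
  assert (s0 : forall k, 0 <= s k).
  { intro k. unfold s, seqX. destruct (decode c k); [apply Hp|lra]. }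
  destruct (Hs (eps/2) ltac:(lra)) as [M HM]. specialize (HM M (le_n _)).
  unfold Rdist in HM. apply Rabs_def2 in HM.
  set (t := fun n => seqX c (fun w => p x w * zs n w)).
  assert (tb : forall n k, 0 <= t n k <= s k).
  { intros n k. unfold t, s, seqX. destruct (decode c k) as [w|]; [|lra].
    pose proof (Hz n w). pose proof (proj1 Hp x w). split. apply Rmult_le_pos; lra.
    rewrite <- (Rmult_1_r (p x w)) at 2. apply Rmult_le_compat_l; lra. }
  assert (F : Un_cv (fun n => sum_f_R0 (t n) M) 0).
  { apply fin_cv. intro k. unfold t, seqX. destruct (decode c k) as [w|].
    - replace 0 with (p x w * 0) by ring. apply CV_mult. apply cv_const. apply Hc.
    - apply cv_const. }
  destruct (F (eps/2) ltac:(lra)) as [N HN]. exists N. intros n Hn.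
  specialize (HN n Hn). unfold Rdist in HN |- *. rewrite Rminus_0_r in HN |- *.
  destruct (Pop_is c p (zs n) x Hp (Hz n)) as [Hi Hb].
  assert (T0 : 0 <= sum_f_R0 (t n) M) by (apply cond_pos_sum; intro; apply tb).
  rewrite Rabs_right in HN by lra. rewrite Rabs_right by lra.
  assert (UB : Pop c p (zs n) x <= sum_f_R0 (t n) M + (1 - sum_f_R0 s M)).
  { apply (@Rle_cv_lim (fun K => sum_f_R0 (t n) K) (fun _ => sum_f_R0 (t n) M + (1 - sum_f_R0 s M))); [|exact Hi|apply cv_const].
    intro K. pose proof (sum_incr s M 1 Hs s0) as S1.
    destruct (Nat.le_gt_cases K M) as [HK|HK].
    - pose proof (sum_mono_N (t n) K M (fun k => proj1 (tb n k)) HK). lra.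
    - replace K with (M + (K - M))%nat by lia.
      pose proof (sum_diff (t n) s M (K - M) (fun k => proj2 (tb n k))).
      pose proof (sum_incr s (M + (K - M)) 1 Hs s0). lra. }
  lra.
Qed.
Lemma eqX_refl {X} (c : countable X) x : eqX c x x = true.
Proof. unfold eqX. apply Nat.eqb_refl. Qed.

Lemma eqX_true {X} (c : countable X) x y : eqX c x y = true -> x = y.
Proof.
  unfold eqX. intro H. apply Nat.eqb_eq in H.
  assert (Some x = Some y). { rewrite <- (decode_code c x), <- (decode_code c y). congruence. }
  congruence.
Qed.

Lemma cv_shift_fwd (u : nat -> R) l : Un_cv u l -> Un_cv (fun n => u (S n)) l.
Proof.
  intros H eps He. destruct (H eps He) as [N HN]. exists N. intros n Hn. apply HN. lia.
Qed.

Lemma squeeze0 (u v : nat -> R) : (forall n, 0 <= u n <= v n) -> Un_cv v 0 -> Un_cv u 0.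
Proof.
  intros H Hv eps He. destruct (Hv eps He) as [N HN]. exists N. intros n Hn.
  specialize (HN n Hn). specialize (H n). unfold Rdist in *. rewrite Rminus_0_r in *.
  rewrite Rabs_right in * by lra. lra.
Qed.

Lemma pn01 {X} (c : countable X) p k x y : stochastic c p -> 0 <= pn c p k x y <= 1.
Proof.
  intro Hp. revert x. induction k; intro x; simpl.
  - destruct (eqX c x y); lra.
  - change (0 <= Pop c p (fun w => pn c p k w y) x <= 1). apply Pop_is; auto.
Qed.

Lemma a_y {X} (c : countable X) p y n : grw c p y 0 n y = 0.
Proof. destruct n; simpl; rewrite eqX_refl; ring. Qed.

Lemma a_dec {X} (c : countable X) p y n x : stochastic c p ->
  grw c p y 0 (S n) x <= grw c p y 0 n x.
Proof.
  intro Hp. revert x. induction n; intro x.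
  - simpl. pose proof (Pop_is c p (grw c p y 0 0) x Hp (grw01 c p y 0 0 Hp)) as [_ H].
    simpl in H. destruct (eqX c x y); lra.
  - change ((if eqX c x y then 0 else 1) * Pop c p (grw c p y 0 (S n)) x <=
            (if eqX c x y then 0 else 1) * Pop c p (grw c p y 0 n) x).
    apply Rmult_le_compat_l. apply ind01.
    apply Pop_mono; auto; apply grw01; auto.
Qed.

Definition Bq {X} (c : countable X) p y (m : nat) : R :=
  match m with O => 1 | S m' => Pop c p (grw c p y 0 m') y end.

Lemma B01 {X} (c : countable X) p y m : stochastic c p -> 0 <= Bq c p y m <= 1.
Proof. intro Hp. destruct m; simpl. lra. apply Pop_is; auto. apply grw01; auto. Qed.

Lemma B_dec {X} (c : countable X) p y m : stochastic c p -> Bq c p y (S m) <= Bq c p y m.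
Proof.
  intro Hp. destruct m.
  - apply (B01 c p y 1 Hp).
  - simpl. apply Pop_mono; auto. 
    all: first [exact (grw01 c p y 0 (S m) Hp) | exact (grw01 c p y 0 m Hp) | intro; apply a_dec; auto].
Qed.

Lemma B_mono {X} (c : countable X) p y j n : stochastic c p -> (j <= n)%nat -> Bq c p y n <= Bq c p y j.
Proof.
  intros Hp H. induction H. lra. pose proof (B_dec c p y m Hp). lra.
Qed.

Lemma Pop_finsum {X} (c : countable X) p (F : nat -> X -> R) n x : stochastic c p ->
  (forall k, b01 (F k)) ->
  sumX_is c (fun w => p x w * sum_f_R0 (fun k => F k w) n) (sum_f_R0 (fun k => Pop c p (F k) x) n).
Proof.
  intros Hp HF. induction n; simpl.
  - apply Pop_is; auto.
  - eapply sX_ext; [|apply (sX_plus c _ _ _ _ IHn (proj1 (Pop_is c p (F (S n)) x Hp (HF (S n)))))].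
    intro w. simpl. ring.
Qed.

Lemma identity {X} (c : countable X) p y n x : stochastic c p ->
  grw c p y 0 n x + sum_f_R0 (fun k => pn c p k x y * Bq c p y (n - k)) n = 1.
Proof.
  intro Hp. revert x. induction n; intro x.
  - simpl. destruct (eqX c x y); lra.
  - rewrite decomp_sum by lia. simpl pred.
    set (F := fun k w => pn c p k w y * Bq c p y (n - k)).
    assert (HF : forall k, b01 (F k)).
    { intros k w. unfold F. pose proof (pn01 c p k w y Hp). pose proof (B01 c p y (n - k) Hp). nra. }
    assert (E1 : sum_f_R0 (fun i => pn c p (S i) x y * Bq c p y (S n - S i)) n
               = sum_f_R0 (fun k => Pop c p (F k) x) n).
    { apply sum_eq. intros i _. unfold F. simpl.
      change (sumX c (fun w => p x w * pn c p i w y)) with (Pop c p (fun w => pn c p i w y) x).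
      transitivity (0 + Bq c p y (n - i) * Pop c p (fun w => pn c p i w y) x). ring.
      rewrite <- Pop_affine; auto. f_equal. apply functional_extensionality; intro w. ring.
      intro w. apply pn01; auto. }
    rewrite E1. rewrite <- (sX_eq c _ _ (Pop_finsum c p F n x Hp HF)).
    assert (E2 : (fun w => p x w * sum_f_R0 (fun k => F k w) n) = (fun w => p x w * (1 + (-1) * grw c p y 0 n w))).
    { apply functional_extensionality; intro w. f_equal. specialize (IHn w). unfold F. lra. }
    rewrite E2. change (sumX c (fun w => p x w * (1 + -1 * grw c p y 0 n w))) with
      (Pop c p (fun w => 1 + -1 * grw c p y 0 n w) x).
    rewrite Pop_affine; auto; [|apply grw01; auto].
    change (grw c p y 0 (S n) x) with ((if eqX c x y then 0 else 1) * Pop c p (grw c p y 0 n) x).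
    replace (S n - 0)%nat with (S n) by lia. simpl Bq. simpl pn.
    destruct (eqX c x y) eqn:E.
    + apply eqX_true in E. subst. lra.
    + lra.
Qed.

Lemma B_to0 {X} (c : countable X) p y : stochastic c p -> recurrent c p -> Un_cv (Bq c p y) 0.
Proof.
  intros Hp Hrec eps He.
  set (S := fun n => sum_f_R0 (fun k => pn c p k y y) n).
  assert (S0 : forall n, 0 <= S n) by (intro; apply cond_pos_sum; intro; apply pn01; auto).
  assert (Sinc : forall n m, (n <= m)%nat -> S n <= S m)
    by (intros; apply sum_mono_N; auto; intro; apply pn01; auto).
  destruct (Classical_Prop.classic (exists n0, S n0 > 1 / eps)) as [[n0 Hn0]|NB].
  - exists n0. intros n Hn. unfold Rdist. rewrite Rminus_0_r.
    pose proof (B01 c p y n Hp). rewrite Rabs_right by lra.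
    assert (BS : Bq c p y n * S n <= 1).
    { pose proof (identity c p y n y Hp) as I. rewrite a_y in I.
      unfold S. rewrite scal_sum.
      rewrite <- I. rewrite Rplus_0_l. apply sum_Rle. intros k Hk.
      apply Rmult_le_compat_l. apply pn01; auto.
      apply B_mono; auto. lia. }
    pose proof (Sinc n0 n Hn).
    assert (1 / eps > 0) by (apply Rdiv_lt_0_compat; lra).
    destruct (Rlt_or_le (Bq c p y n) eps) as [|Hge]; auto.
    exfalso. assert (eps * S n <= Bq c p y n * S n) by (apply Rmult_le_compat_r; lra).
    assert (eps * (1 / eps) < eps * S n) by (apply Rmult_lt_compat_l; lra).
    replace (eps * (1 / eps)) with 1 in * by (field; lra). lra.
  - exfalso. apply (Hrec y).
    assert (G : Un_growing S) by (intro n; apply Sinc; lia).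
    assert (U : has_ub S).
    { exists (1 / eps). intros z [i ->]. apply Rnot_gt_le. intro. apply NB. eauto. }
    destruct (growing_cv S G U) as [l Hl]. exists l. exact Hl.
Qed.
Lemma a_to0 {X} (c : countable X) rho p y : stochastic c p -> recurrent c p -> irreducible rho p ->
  forall w, Un_cv (fun n => grw c p y 0 n w) 0.
Proof.
  intros Hp Hrec Hirr.
  set (Q := fun x => Un_cv (fun n => Pop c p (grw c p y 0 n) x) 0).
  assert (Qy : Q y).
  { unfold Q. apply (cv_shift_fwd (Bq c p y)). apply B_to0; auto. }
  assert (Qa : forall x, Q x -> Un_cv (fun n => grw c p y 0 n x) 0).
  { intros x Hx. destruct (eqX c x y) eqn:E.
    - apply eqX_true in E. subst. intros eps He. exists 0%nat. intros n _.
      rewrite a_y. unfold Rdist. rewrite Rminus_diag, Rabs_R0. lra.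
    - apply cv_shift. eapply squeeze0; [|exact Hx]. intro n. simpl. rewrite E.
      pose proof (Pop_is c p (grw c p y 0 n) x Hp (grw01 c p y 0 n Hp)). lra. }
  assert (Qall : forall x, Q x).
  { intro x. pose proof (clos_rt_rtn1 _ _ _ _ (Hirr y x)) as H.
    induction H as [|x0 x' [Hpos _] _ IH]; auto.
    assert (A : Un_cv (fun n => grw c p y 0 n x') 0).
    { eapply squeeze0 with (v := fun n => Pop c p (grw c p y 0 n) x0 * / p x0 x').
      - intro n. pose proof (grw01 c p y 0 n Hp x'). split. lra.
        pose proof (Pop_term c p (grw c p y 0 n) x0 x' Hp (grw01 c p y 0 n Hp)).
        apply (Rmult_le_reg_l (p x0 x')); auto. field_simplify; lra.
      - replace 0 with (0 * / p x0 x') by ring. apply CV_mult; auto. apply cv_const. }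
    destruct (eqX c x' y) eqn:E.
    - apply eqX_true in E. subst. auto.
    - unfold Q. eapply cv_shift_fwd in A. eapply squeeze0; [|exact A].
      intro n. simpl. rewrite E. pose proof (Pop_is c p (grw c p y 0 n) x' Hp (grw01 c p y 0 n Hp)). lra. }
  intro w. apply Qa, Qall.
Qed.

Lemma g_to0 {X} (c : countable X) rho p y : stochastic c p -> recurrent c p -> irreducible rho p ->
  forall N w, Un_cv (fun n => grw c p y N n w) 0.
Proof.
  intros Hp Hrec Hirr N. induction N; intro w.
  - eapply a_to0; eauto.
  - apply cv_shift. simpl. apply dom_cv; auto. intro. apply grw01; auto.
Qed.

Theorem mainTheorem9 (X : Type) (c : countable X) (rho : nat -> R) (p : X -> X -> R)
  (Hrho : prob_nat rho) (Hp : stochastic c p)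
  (Hirr : irreducible rho p)
  (Hstd : exists k, k <> 1%nat /\ 0 < rho k)
  (Hrec : recurrent c p)
  (Hsurv : exists x, global_survival c rho p x) :
  forall w y : X, exists L, is_qbar c rho p w L /\ is_q c rho p w y L /\ L < 1.
Proof.
  intros w y. destruct Hsurv as [x0 [L [HL HL1]]].
  assert (Hv : Un_cv (vs rho) L).
  { unfold is_qbar in HL. replace (vs rho) with (fun n => ext_by c rho p n x0); auto.
    apply functional_extensionality; intro n. apply ext_vs; auto. }
  exists L. split; [|split; auto].
  - unfold is_qbar. replace (fun n => ext_by c rho p n w) with (vs rho); auto.
    apply functional_extensionality; intro n. symmetry. apply ext_vs; auto.
  - assert (Ex : forall N, {l | Un_cv (fun n => avoid c rho p y N n w) l}).
    { intro N. apply decreasing_cv.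
      - intro n. apply avoid_dec; auto.
      - exists 0. intros z [i ->]. unfold opp_seq.
        pose proof (avoid01 c rho p y N i Hrho Hp w). lra. }
    exists (fun N => proj1_sig (Ex N)). split.
    + intro N. exact (proj2_sig (Ex N)).
    + assert (Bd : forall N, vs rho N <= proj1_sig (Ex N) <= L).
      { intro N. destruct (Ex N) as [l Hl]. simpl. split.
        - apply (@Rle_cv_lim (fun _ => vs rho N) _ _ _ (fun n => avoid_lb c rho p y N n w Hrho Hp) (cv_const _) Hl).
        - assert (C : Un_cv (fun n => vs rho n + (1 - vs rho n) * grw c p y N n w) (L + (1 - L) * 0)).
          { apply CV_plus; auto. apply CV_mult. apply CV_minus; auto. apply cv_const.
            eapply g_to0; eauto. }
          rewrite Rmult_0_r, Rplus_0_r in C.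
          apply (@Rle_cv_lim _ _ _ _ (fun n => avoid_ub c rho p y N n w Hrho Hp) Hl C). }
      intros eps He. destruct (Hv eps He) as [N0 HN0]. exists N0. intros N HN.
      specialize (HN0 N HN). specialize (Bd N). unfold Rdist in *.
      rewrite Rabs_left1 by lra. rewrite Rabs_minus_sym in HN0. rewrite Rabs_right in HN0 by lra. lra.
Qed.
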